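(* For every prime $p\ge7$, $N_{=}(4p)\ge p^2+11p-1$.
   Context: Graphs are finite, undirected and simple; the order of a graph is its number of vertices. For a positive integer $k$, $N_{=}(k)$ denotes the smallest integer $n\ge1$ such that every graph on $n$ vertices contains an induced regular subgraph (all vertices of the subgraph having the same degree within it) of order exactly $k$. *)

(* Defs.v *)
From mathcomp Require Import all_boot.
Set Implicit Arguments. Unset Strict Implicit. Unset Printing Implicit Defensive.

Definition simple_graph (n : nat) (e : rel 'I_n) : Prop :=
  (forall x, ~~ e x x) /\ (forall x y, e x y = e y x).

Definition induced_regular (n : nat) (e : rel 'I_n) (S : {set 'I_n}) : Prop :=
  exists d : nat, forall v, v \in S -> #|[set u in S | e v u]| = d.

Definition forces_reg (k n : nat) : Prop :=
  forall e : rel 'I_n, simple_graph e ->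
    exists S : {set 'I_n}, #|S| = k /\ induced_regular e S.

(* N_=(k) >= m : every n >= 1 with the forcing property is at least m
   (equivalently, the smallest such n is at least m). *)
Definition N_eq_ge (k m : nat) : Prop :=
  forall n : nat, 1 <= n -> forces_reg k n -> m <= n.

(* Main.v *)
Require Import Defs.
From mathcomp Require Import all_boot.
From mathcomp Require Import zify.
Set Implicit Arguments. Unset Strict Implicit. Unset Printing Implicit Defensive.

Fixpoint mk (x : bool) (f : nat -> nat) (L : nat) : seq (bool * nat) :=
  if L is L'.+1 then mk x f L' ++ nseq (f L') (x, L') else [::].

Lemma count_mk x f L y j :
  count_mem (y, j) (mk x f L) = ((x == y) && (j < L)) * f j.
Proof.
elim: L => [|L IH] /=; first by rewrite andbF.
rewrite count_cat IH count_nseq /= xpair_eqE.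
case: (x == y); last by rewrite /= !mul0n.
rewrite /=.
case: (ltngtP j L) => [h|h|->].
- by rewrite ltnS (ltnW h) /= mul1n mul0n addn0.
- by rewrite ltnS leqNgt h /= !mul0n.
- by rewrite ltnSn /= mul0n.
Qed.

Lemma size_mk x f L : size (mk x f L) = \sum_(0 <= k < L) f k.
Proof.
elim: L => [|L IH] /=; first by rewrite big_geq.
by rewrite size_cat IH size_nseq big_nat_recr.
Qed.

Definition szA p j := if j < p then 3 else if j < 2*p-2 then 2 else if j < 2*p then 1 else 0.
Definition szB p j := if j < 3 then 2*p-1 else if j < p-1 then p-1
  else if j < 2*p-1 then 3 else if j < 4*p-1 then 1 else 0.

Lemma sum_const_range (f : nat -> nat) a b c : a <= b ->
  (forall k, a <= k < b -> f k = c) -> \sum_(a <= k < b) f k = (b - a) * c.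
Proof.
move=> hab H; rewrite (eq_big_nat _ _ H) sum_nat_const_nat //.
Qed.

Ltac szt := repeat (case: ifP); lia.

Lemma sumA p : 2 <= p -> \sum_(0 <= k < 2*p) szA p k = 5*p - 2.
Proof.
move=> hp.
have e1 : \sum_(0 <= k < p) szA p k = (p - 0) * 3.
  by apply: sum_const_range => // k hk; rewrite /szA; szt.
have e2 : \sum_(p <= k < 2*p-2) szA p k = (2*p-2 - p) * 2.
  by apply: sum_const_range => [|k hk]; rewrite /szA; szt.
have e3 : \sum_(2*p-2 <= k < 2*p) szA p k = (2*p - (2*p-2)) * 1.
  by apply: sum_const_range => [|k hk]; rewrite /szA; szt.
rewrite (big_cat_nat _ (n := p)) //=; last lia.
rewrite (big_cat_nat _ (m := p) (n := 2*p-2)) //=; try lia.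
all: try (rewrite e1 e2 e3; lia).
Qed.

Lemma sumB p : 5 <= p -> \sum_(0 <= k < 4*p-1) szB p k = p*p + 6*p + 1.
Proof.
move=> hp.
have e1 : \sum_(0 <= k < 3) szB p k = (3 - 0) * (2*p-1).
  by apply: sum_const_range => // k hk; rewrite /szB; szt.
have e2 : \sum_(3 <= k < p-1) szB p k = (p-1 - 3) * (p-1).
  by apply: sum_const_range => [|k hk]; rewrite /szB; szt.
have e3 : \sum_(p-1 <= k < 2*p-1) szB p k = (2*p-1 - (p-1)) * 3.
  by apply: sum_const_range => [|k hk]; rewrite /szB; szt.
have e4 : \sum_(2*p-1 <= k < 4*p-1) szB p k = (4*p-1 - (2*p-1)) * 1.
  by apply: sum_const_range => [|k hk]; rewrite /szB; szt.
rewrite (big_cat_nat _ (n := 3)) //=; last lia.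
rewrite (big_cat_nat _ (m := 3) (n := p-1)) //=; try lia.
rewrite (big_cat_nat _ (m := p-1) (n := 2*p-1)) //=; try lia.
all: try (rewrite e1 e2 e3 e4; nia).
Qed.
Definition eG n (lab : 'I_n -> bool * nat) : rel 'I_n := fun x y =>
  (x != y) && (if (lab x).1 then (lab y).1 && ((lab y).2 == (lab x).2)
               else ~~ (lab y).1 && ((lab y).2 != (lab x).2)).

Lemma eG_simple n (lab : 'I_n -> bool * nat) : simple_graph (@eG n lab).
Proof.
split => [x|x y]; first by rewrite /eG eqxx.
rewrite /eG eq_sym; congr (_ && _).
by case: (lab x) => [[] a]; case: (lab y) => [[] b] //=; rewrite eq_sym.
Qed.

Definition Cl n (lab : 'I_n -> bool * nat) (S : {set 'I_n}) v :=
  [set u in S | lab u == lab v].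

Definition Bset n (lab : 'I_n -> bool * nat) (S : {set 'I_n}) :=
  [set u in S | ~~ (lab u).1].

Lemma degA n (lab : 'I_n -> bool * nat) (S : {set 'I_n}) v : v \in S -> (lab v).1 ->
  #|[set u in S | eG lab v u]| = #|Cl lab S v| - 1.
Proof.
move=> vS hv.
rewrite (cardsD1 v (Cl lab S v)) inE vS eqxx /= add1n subn1 /=.
apply: eq_card => u; rewrite !inE /eG hv.
case: (u =P v) => [->|/eqP huv]; first by rewrite !eqxx /= ?andbF.
rewrite eq_sym huv /=; case: (u \in S) => //=.
move: hv; case: (lab v) => [[] a] //= _; case: (lab u) => [[] b] //=.
Qed.

Lemma ClB n (lab : 'I_n -> bool * nat) (S : {set 'I_n}) v : ~~ (lab v).1 -> Cl lab S v \subset Bset lab S.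
Proof.
move=> hv; apply/subsetP => u; rewrite !inE => /andP [-> /eqP ->]; by [].
Qed.

Lemma degB n (lab : 'I_n -> bool * nat) (S : {set 'I_n}) v : v \in S -> ~~ (lab v).1 ->
  #|[set u in S | eG lab v u]| = #|Bset lab S| - #|Cl lab S v|.
Proof.
move=> vS hv.
rewrite -(setIidPr (ClB S hv)) -cardsD.
apply: eq_card => u; rewrite !inE /eG (negbTE hv).
case: (u =P v) => [->|/eqP huv]; first by case: (v \in S); rewrite !eqxx.
rewrite eq_sym in huv; rewrite huv /=; case: (u \in S) => //=.
move: hv; case: (lab v) => [[] a] //= _; case: (lab u) => [[] b] //=.
by rewrite xpair_eqE /= andbT.
Qed.
Lemma sum_split L N t (g : nat -> nat) :
  (forall j, j < L -> g j = 0 \/ (g j = t /\ j < N)) ->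
  exists m, [/\ m <= L, m <= N & \sum_(0 <= j < L) g j = t * m].
Proof.
elim: L => [|L IH] H; first by exists 0; rewrite big_geq // muln0.
case: IH => [j hj|m [h1 h2 h3]]; first by apply: H; lia.
rewrite big_nat_recr //=.
have [->|[-> hL]] := H L (leqnn _).
  by exists m; split => //; [lia | rewrite h3 addn0].
by exists m.+1; split; [lia | lia | rewrite h3 mulnS addnC].
Qed.

Lemma card_part n (X : {set 'I_n}) (c : 'I_n -> nat) L :
  (forall u, u \in X -> c u < L) ->
  #|X| = \sum_(0 <= j < L) #|[set u in X | c u == j]|.
Proof.
elim: L X => [|L IH] X H.
  rewrite big_geq //; apply/eqP; rewrite cards_eq0; apply/eqP/setP => u.
  by rewrite inE; apply/negP => /H.
rewrite big_nat_recr //=.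
rewrite -(cardsID [set u | c u == L] X).
rewrite addnC; congr (_ + _); last first.
  by apply: eq_card => u; rewrite !inE andbC.
rewrite (IH (X :\: [set u | c u == L])).
  apply: eq_big_nat => j /andP [_ hj]; apply: eq_card => u; rewrite !inE.
  case: (c u =P j) => [->|]; last by rewrite !andbF.
  by rewrite !andbT; have -> : (j == L) = false by apply/eqP; lia.
move=> u; rewrite !inE => /andP [h1 h2]; have := H u h2; move/eqP: h1; lia.
Qed.
Lemma card_nth_le (T : eqType) (d : T) (s : seq T) n (l : T) : n <= size s ->
  #|[set u : 'I_n | nth d s u == l]| <= count_mem l s.
Proof.
move=> hn.
rewrite cardE size_filter -enumT.
have -> : count (mem [set u : 'I_n | nth d s u == l]) (enum 'I_n)
   = count (fun i => nth d s i == l) (map val (enum 'I_n)).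
  by rewrite count_map; apply: eq_count => u; rewrite /= inE.
rewrite val_enum_ord -(count_map (nth d s) (pred1 l)) map_nth_iota0 //.
by rewrite -{2}(cat_take_drop n s) count_cat leq_addr.
Qed.

Definition slots p := mk true (szA p) (2*p) ++ mk false (szB p) (4*p-1).
Definition labp p n : 'I_n -> bool * nat := fun i => nth (true, 0) (slots p) i.
Arguments labp : clear implicits.

Lemma size_slots p : 5 <= p -> size (slots p) = p*p + 11*p - 1.
Proof. move=> hp; rewrite size_cat !size_mk sumA ?sumB; lia. Qed.

Lemma count_slots p x j : count_mem (x, j) (slots p) =
  (x && (j < 2*p)) * szA p j + (~~ x && (j < 4*p-1)) * szB p j.
Proof. by rewrite count_cat !count_mk; case: x. Qed.

Lemma labrange p n (hn : n <= size (slots p)) (v : 'I_n) :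
  if (labp p n v).1 then (labp p n v).2 < 2*p else (labp p n v).2 < 4*p-1.
Proof.
have : labp p n v \in slots p by apply: mem_nth; apply: leq_trans hn.
rewrite -has_pred1 has_count.
case: (labp p n v) => x j; rewrite count_slots /=.
case: x => /=; [have [h|h] := ltnP j (2*p) | have [h|h] := ltnP j (4*p-1)] => //;
  by rewrite ltnNge h /= !mul0n.
Qed.

Lemma clbound p n (hn : n <= size (slots p)) (S : {set 'I_n}) v :
  #|Cl (labp p n) S v| <=
  (if (labp p n v).1 then szA p (labp p n v).2 else szB p (labp p n v).2).
Proof.
have h1 : #|Cl (labp p n) S v| <= #|[set u : 'I_n | nth (true, 0) (slots p) u == labp p n v]|.
  by apply: subset_leq_card; apply/subsetP => u; rewrite !inE => /andP [_ ->].
have h2 := @card_nth_le _ (true, 0) (slots p) n (labp p n v) hn.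
apply: leq_trans (leq_trans h1 h2) _.
case: (labp p n v) => x j; rewrite count_slots /=.
by case: x => /=; case: (_ < _) => /=; rewrite ?mul1n ?mul0n ?addn0.
Qed.

Lemma class_sum n (lab : 'I_n -> bool * nat) (X : {set 'I_n}) (L N t : nat) (sz : nat -> nat) :
  (forall u, u \in X -> (lab u).2 < L) ->
  (forall u, u \in X -> #|[set w in X | (lab w).2 == (lab u).2]| = t /\ t <= sz (lab u).2) ->
  (forall j, t <= sz j -> j < L -> j < N) ->
  exists m, m <= N /\ #|X| = t * m.
Proof.
move=> hL hc hN.
rewrite (card_part hL).
have [|m [_ h2 h3]] := @sum_split L N t (fun j => #|[set u in X | (lab u).2 == j]|).
  move=> j hj.
  case: (set_0Vmem [set u in X | (lab u).2 == j]) => [->|[u]]; first by left; rewrite cards0.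
  rewrite inE => /andP [uX /eqP hu]; right; subst j.
  have [h1 h2] := hc u uX; split => //.
  by apply: hN.
by exists m.
Qed.

Lemma three_not p m : prime p -> 7 <= p -> 3 * m = 4 * p -> False.
Proof.
move=> pp p7 h.
have : 3 %| 4 * p by rewrite -h dvdn_mulr.
rewrite Euclid_dvdM // => /orP [//|].
move/(prime_nt_dvdP pp) => /(_ isT) h3; lia.
Qed.

Lemma mid_not p s m : prime p -> 0 < s -> s < p -> m < p -> s * m = 4 * p -> False.
Proof.
move=> pp s0 sp mp h.
have : p %| s * m by rewrite h dvdn_mull.
rewrite Euclid_dvdM // => /orP [] hd.
  by have := dvdn_leq s0 hd; lia.
have m0 : 0 < m by case: m h mp {hd} => [|m] //; rewrite muln0; have := prime_gt0 pp; lia.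
by have := dvdn_leq m0 hd; lia.
Qed.

Definition NA p t := if t <= 1 then 2*p else if t == 2 then 2*p-2 else if t == 3 then p else 0.
Definition NB p s := if s <= 1 then 4*p-1 else if s <= 3 then 2*p-1
  else if s <= p-1 then p-1 else if s <= 2*p-1 then 3 else 0.

Lemma NA_ok p t j : 5 <= p -> 1 <= t -> t <= szA p j -> j < 2*p -> j < NA p t.
Proof. move=> hp ht; rewrite /NA /szA; szt. Qed.

Lemma NB_ok p s j : 5 <= p -> 1 <= s -> s <= szB p j -> j < 4*p-1 -> j < NB p s.
Proof. move=> hp ht; rewrite /NB /szB; szt. Qed.

Lemma fin_arith p d mA a b cw cu : 7 <= p -> d <= 2 -> 0 < d ->
  mA <= (if d == 0 then 2 * p else if d == 1 then 2 * p - 2 else p) ->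
  a = d.+1 * mA -> a + b = 4 * p -> cw + d = b -> cu + d = b -> cu <= b - cw -> False.
Proof. by case: d => [|[|[|d]]] //= *; lia. Qed.

Theorem theorem9 (p : nat) : prime p -> 7 <= p ->
  N_eq_ge (4 * p) (p ^ 2 + 11 * p - 1).
Proof.
move=> pp p7 n n1 H.
rewrite leqNgt; apply/negP => hn.
have hsz : n <= size (slots p) by rewrite size_slots; [move: hn; rewrite expnS expn1; lia | lia].
pose lab := labp p n.
have [S [hS [d hd]]] := H (eG lab) (eG_simple lab).
pose SA := [set u in S | (lab u).1].
pose SB := Bset lab S.
have hab : #|SA| + #|SB| = 4*p.
  rewrite -hS -(cardsID [set u | (lab u).1] S); congr (_ + _); apply: eq_card => u;
  by rewrite !inE // andbC.
have clA : forall u, u \in SA -> [set w in SA | (lab w).2 == (lab u).2] = Cl lab S u.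
  move=> u; rewrite inE => /andP [uS hu]; apply/setP => w; rewrite !inE.
  case: (w \in S) => //=; move: hu; case: (lab u) => [[] a] //= _; case: (lab w) => [[] b] //=.
have clB : forall u, u \in SB -> [set w in SB | (lab w).2 == (lab u).2] = Cl lab S u.
  move=> u; rewrite inE => /andP [uS hu]; apply/setP => w; rewrite !inE.
  case: (w \in S) => //=; move: hu; case: (lab u) => [[] a] //= _; case: (lab w) => [[] b] //=.
have Cl1 : forall u, u \in S -> 0 < #|Cl lab S u|.
  by move=> u uS; apply/card_gt0P; exists u; rewrite inE uS eqxx.
have degA' : forall u, u \in SA -> #|Cl lab S u| = d.+1.
  move=> u; rewrite inE => /andP [uS hu].
  have := degA uS hu; rewrite hd //; have := Cl1 u uS; lia.
have degB' : forall u, u \in SB -> #|Cl lab S u| + d = #|SB|.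
  move=> u; rewrite inE => /andP [uS hu].
  have := degB uS hu; rewrite hd // => ->.
  have := subset_leq_card (ClB S hu); rewrite -/SB; lia.
have rng : forall v, if (lab v).1 then (lab v).2 < 2*p else (lab v).2 < 4*p-1
  := labrange hsz.
have bnd : forall v, #|Cl lab S v| <=
  (if (lab v).1 then szA p (lab v).2 else szB p (lab v).2) := clbound hsz S.
have [SA0|[v vA]] := set_0Vmem SA.
  rewrite SA0 cards0 add0n in hab.
  have [w wB] : exists w, w \in SB by apply/card_gt0P; rewrite hab; lia.
  pose s := #|Cl lab S w|.
  have hs : forall u, u \in SB -> #|Cl lab S u| = s.
    by move=> u uB; have := degB' u uB; have := degB' w wB; rewrite /s; lia.
  have s1 : 1 <= s by apply: Cl1; move: wB; rewrite inE => /andP [].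
  have [mB [hmB hbB]] : exists m, m <= NB p s /\ #|SB| = s * m.
    apply: (class_sum (lab := lab) (X := SB) (L := 4*p-1) (sz := szB p)).
    - move=> u; rewrite inE => /andP [_ hu]; have := rng u; by rewrite (negbTE hu).
    - move=> u uB.
      have hu : ~~ (lab u).1 by move: uB; rewrite inE => /andP [].
      have e1 := clB u uB; have e2 := hs u uB; have e3 := bnd u.
      rewrite (negbTE hu) e2 in e3; rewrite e1 e2; split => //.
    - by move=> j h1 h2; apply: NB_ok => //; lia.
  clearbody s; rewrite hab in hbB; move: hmB; rewrite /NB.
  have [h1|h1] := leqP s 1.
    move=> hm; have e : s = 1 by lia.
    rewrite e mul1n in hbB; lia.
  have [h2|h2] := leqP s 3.
    move=> hm; have [e|e] : s = 2 \/ s = 3 by lia.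
      by rewrite e in hbB; lia.
    by rewrite e in hbB; apply: (three_not pp p7 (esym hbB)).
  have [h3|h3] := leqP s (p-1).
    by move=> hm; apply: (mid_not pp (m := mB) (s := s)) => //; lia.
  have [h4|h4] := leqP s (2*p-1).
    move=> hm; have [e|e] : mB = 3 \/ mB <= 2 by lia.
      by rewrite e (mulnC s 3) in hbB; apply: (three_not pp p7 (esym hbB)).
    have : s * mB <= (2*p-1) * 2 by apply: leq_mul.
    lia.
  by rewrite leqn0 => /eqP e; rewrite e muln0 in hbB; lia.
have hvA : (lab v).1 by move: vA; rewrite inE => /andP [].
have dle : d <= 2.
  have := bnd v; rewrite hvA degA' //; rewrite /szA; szt.
have [mA [hmA haA]] : exists m, m <= NA p d.+1 /\ #|SA| = d.+1 * m.
  apply: (class_sum (lab := lab) (X := SA) (L := 2*p) (sz := szA p)).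
  - move=> u; rewrite inE => /andP [_ hu]; have := rng u; by rewrite hu.
  - move=> u uA.
    have hu : (lab u).1 by move: uA; rewrite inE => /andP [].
    have e1 := clA u uA; have e2 := degA' u uA; have e3 := bnd u.
    rewrite hu e2 in e3; rewrite e1 e2; split => //.
  - by move=> j h1 h2; apply: NA_ok => //; lia.
have hNA : NA p d.+1 = if d == 0 then 2*p else if d == 1 then 2*p-2 else p.
  by rewrite /NA; case: d dle {hd degA' degB' haA hmA} => [|[|[|d]]].
rewrite hNA in hmA.
have [SB0|[w wB]] := set_0Vmem SB.
  rewrite SB0 cards0 addn0 in hab.
  move: hmA; case: d dle {hd degA' degB' hNA} haA => [|[|[|d]]] //= _ haA hm; have := etrans (esym hab) haA; lia.
have hw := degB' w wB.
have hwu : ~~ (lab w).1 by move: wB; rewrite inE => /andP [].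
have [d0|d1] := posnP d.
  have := bnd w; rewrite (negbTE hwu).
  have : szB p (lab w).2 <= 2*p-1 by rewrite /szB; szt.
  have haA' : #|SA| = 1 * mA by rewrite -d0.
  have hw' : #|Cl lab S w| = #|SB| by rewrite -hw d0 addn0.
  move: hmA; rewrite d0 /=; idtac.
move=> h1 h2 h3; have h4 := leq_trans h3 h2; rewrite hw' in h4; rewrite haA' in hab.
clear -h1 h4 hab p7. lia.
have [u uD] : exists u, u \in SB :\: Cl lab S w.
  apply/card_gt0P; have : 0 < #|SB| - #|Cl lab S w| by lia.
  by rewrite cardsD (setIidPr (ClB S hwu)).
have uB : u \in SB by move: uD; rewrite inE => /andP [].
have hcu := degB' u uB.
have sub : Cl lab S u \subset SB :\: Cl lab S w.
  apply/subsetP => x; rewrite !inE => /andP [xS /eqP hx].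
  move: uD; rewrite !inE => /andP [hnw /andP [uS hu]].
  by rewrite xS hx hu /= andbT; move: hnw; rewrite uS.
have hle : #|Cl lab S u| <= #|SB| - #|Cl lab S w|.
  by have := subset_leq_card sub; rewrite cardsD (setIidPr (ClB S hwu)).
exact: (fin_arith p7 dle d1 hmA haA hab hw hcu hle).
Qed.
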